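(* Let $x_0\in\mathbb{R}$, $\alpha\in\mathbb{R}$, $0\le\gamma<1$, and let $S(\sigma)=\alpha+\frac{\gamma}{1-\gamma}(\alpha-\sigma)$. Let $\psi$ be a wavelet in the Schwartz class with all moments vanishing, and let $f$ be the function (or distribution) defined near $x_0$ by $$f(x)=\sum_{j\ge0}\ \sum_{k\in\mathbb{Z},\ |k-2^jx_0|<2^j} c_{j,k}\,\psi(2^jx-k).$$ Then the 2-microlocal frontier of $f$ at $x_0$ is $S$ if and only if there exist positive sequences $(\mathcal{C}_{j,k})$, $(\lambda_{j,k})$ (indexed by $j\ge0$, $|k-2^jx_0|<2^j$) such that for all $j\ge0$ and $|k-2^jx_0|<2^j$, $$|c_{j,k}|\le \mathcal{C}_{j,k}\cdot\inf_{\sigma\in\mathbb{R}}\left\{2^{-jS(\sigma)}\left(\frac{1+|k-2^jx_0|}{\lambda_{j,k}}\right)^{S(\sigma)-\sigma}\right\}\qquad(\ast)$$ and: (i) for every $C\in\mathbb{R}$ and every choice of integers $k_j$ with $|k_j-2^jx_0|<2^j$, $$\limsup_{j\to+\infty}\left(\frac{\log_2(\mathcal{C}_{j,k_j})}{j}+C\,\frac{\log_2(\lambda_{j,k_j})}{j}\right)\le0;$$ (ii) there exists a sequence $(j_n,k_n)$ with $j_n$ strictly increasing and $|k_n-2^{j_n}x_0|<2^{j_n}$ such that equality holds in $(\ast)$ for $(j,k)=(j_n,k_n)$, $c_{j_n,k_n}\neq0$, and $$\lim_{n\to+\infty}\frac{\log_2(\mathcal{C}_{j_n,k_n})}{j_n}=0,\qquad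 \lim_{n\to+\infty}\frac{\log_2(\lambda_{j_n,k_n})}{j_n}=0.$$
   Context: A wavelet is a function $\psi\in L^2(\mathbb{R})$ such that $\{2^{j/2}\psi(2^jx-k)\}_{j,k\in\mathbb{Z}}$ is an orthonormal basis of $L^2(\mathbb{R})$; the wavelet coefficients of $f$ are $c_{j,k}=2^{j/2}\langle f,\psi_{j,k}\rangle$ with $\psi_{j,k}(x)=2^{j/2}\psi(2^jx-k)$. For $s,s'\in\mathbb{R}$, the (local) 2-microlocal space $C^{s,s'}_{x_0}$ is defined as: $f\in C^{s,s'}_{x_0}$ iff there is $C>0$ with $|c_{j,k}|\le C\,2^{-js}(1+|k-2^jx_0|)^{-s'}$ for all $j\ge0$ and $k\in\mathbb{Z}$ with $|k/2^j-x_0|<1$. The 2-microlocal frontier of $f$ at $x_0$ is the function $\sigma\mapsto\sup\{s: f\in C^{s,\sigma-s}_{x_0}\}$. *)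

(* Defs.v *)
From Stdlib Require Import Reals ZArith.
Open Scope R_scope.

(* Wavelet coefficients c_{j,k} (j : nat, k : Z), real-valued. *)
Definition coeffs := nat -> Z -> R.

Definition log2 (x : R) : R := ln x / ln 2.

(* Index set of the local 2-microlocal space: |k/2^j - x0| < 1. *)
Definition near (x0 : R) (j : nat) (k : Z) : Prop :=
  Rabs (IZR k / 2 ^ j - x0) < 1.

(* Index set of the sum defining f:  |k - 2^j x0| < 2^j. *)
Definition cone (x0 : R) (j : nat) (k : Z) : Prop :=
  Rabs (IZR k - 2 ^ j * x0) < 2 ^ j.

(* f \in C^{s,s'}_{x0}, expressed through its wavelet coefficients c. *)
Definition in_C2ml (c : coeffs) (x0 s s' : R) : Prop :=
  exists C : R, 0 < C /\
    forall (j : nat) (k : Z), near x0 j k ->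
      Rabs (c j k) <= C * Rpower 2 (- (INR j) * s)
                        * Rpower (1 + Rabs (IZR k - 2 ^ j * x0)) (- s').

Definition frontier_is (c : coeffs) (x0 : R) (S : R -> R) : Prop :=
  forall sigma : R, is_lub (fun s => in_C2ml c x0 s (sigma - s)) (S sigma).

Definition is_inf (E : R -> Prop) (m : R) : Prop :=
  (forall x, E x -> m <= x) /\ (forall b, (forall x, E x -> b <= x) -> b <= m).

Definition Sfun (alpha gamma : R) (sigma : R) : R :=
  alpha + gamma / (1 - gamma) * (alpha - sigma).

Definition bound_set (alpha gamma x0 : R) (j : nat) (k : Z) (lam : R) : R -> Prop :=
  fun v => exists sigma : R,
    v = Rpower 2 (- (INR j) * Sfun alpha gamma sigma)
        * Rpower ((1 + Rabs (IZR k - 2 ^ j * x0)) / lam)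
                 (Sfun alpha gamma sigma - sigma).

(* Main.v *)
Require Import Defs.
From Stdlib Require Import Reals ZArith Lra Lia ClassicalEpsilon Classical.
Open Scope R_scope.

Definition Yf (x0 : R) (j : nat) (k : Z) : R := ln (1 + Rabs (IZR k - 2 ^ j * x0)).
Definition Jf (j : nat) : R := INR j * ln 2.

Lemma ln2_pos : 0 < ln 2.
Proof. pose proof ln_lt_2; lra. Qed.

Lemma ln_le' x y : 0 < x -> x <= y -> ln x <= ln y.
Proof. intros Hx [H|H]; [left; apply ln_increasing; auto | subst; lra]. Qed.

Lemma exp_le' x y : x <= y -> exp x <= exp y.
Proof. intros [H|H]; [left; apply exp_increasing; auto | subst; lra]. Qed.

Lemma pow2_pos j : 0 < 2 ^ j.
Proof. apply pow_lt; lra. Qed.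

Lemma near_cone x0 j k : near x0 j k <-> cone x0 j k.
Proof.
  unfold near, cone. pose proof (pow2_pos j) as Hp.
  replace (IZR k - 2 ^ j * x0) with (2 ^ j * (IZR k / 2 ^ j - x0)) by (field; lra).
  rewrite Rabs_mult, (Rabs_pos_eq (2 ^ j)) by lra.
  split; intro H; nra.
Qed.

Lemma Y_nonneg x0 j k : 0 <= Yf x0 j k.
Proof.
  unfold Yf. rewrite <- ln_1. apply ln_le'; [lra|]. pose proof (Rabs_pos (IZR k - 2 ^ j * x0)); lra.
Qed.

Lemma A_pos x0 j k : 0 < 1 + Rabs (IZR k - 2 ^ j * x0).
Proof. pose proof (Rabs_pos (IZR k - 2 ^ j * x0)); lra. Qed.

Lemma Y_le x0 j k : cone x0 j k -> Yf x0 j k <= Jf j + ln 2.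
Proof.
  unfold cone, Yf, Jf. intro H.
  assert (H1 : 1 <= 2 ^ j) by (apply pow_R1_Rle; lra).
  replace (INR j * ln 2 + ln 2) with (ln (2 * 2 ^ j)).
  - apply ln_le'; [apply A_pos|]. lra.
  - rewrite ln_mult, ln_pow; try lra; apply pow2_pos.
Qed.

Lemma trans c x0 s s' :
  in_C2ml c x0 s s' <-> exists K, forall j k, cone x0 j k -> c j k <> 0 ->
    ln (Rabs (c j k)) + INR j * s * ln 2 + s' * Yf x0 j k <= K.
Proof.
  split.
  - intros [C [HC H]]. exists (ln C). intros j k Hc Hn.
    apply near_cone in Hc. specialize (H j k Hc). unfold Rpower in H.
    apply ln_le' in H; [| apply Rabs_pos_lt; auto].
    rewrite !ln_mult, !ln_exp in H; try (apply exp_pos); try (apply Rmult_lt_0_compat; auto; apply exp_pos); auto.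
    unfold Yf. lra.
  - intros [K H]. exists (exp K). split; [apply exp_pos|]. intros j k Hn.
    apply near_cone in Hn. unfold Rpower.
    destruct (Req_dec (c j k) 0) as [H0|H0].
    + rewrite H0, Rabs_R0. left. repeat apply Rmult_lt_0_compat; apply exp_pos.
    + specialize (H j k Hn H0).
      rewrite <- (exp_ln (Rabs (c j k))) by (apply Rabs_pos_lt; auto).
      rewrite <- !exp_plus. apply exp_le'. unfold Yf in H. lra.
Qed.

Lemma cone_ex x0 j : exists k, cone x0 j k.
Proof.
  exists (up (2 ^ j * x0) - 1)%Z. unfold cone. rewrite minus_IZR.
  destruct (archimed (2 ^ j * x0)) as [H1 H2].
  assert (H3 : 1 <= 2 ^ j) by (apply pow_R1_Rle; lra).
  apply Rabs_def1; lra.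
Qed.

Lemma range_bound (f : Z -> R) (n : nat) : exists M, forall k, (Z.abs k <= Z.of_nat n)%Z -> f k <= M.
Proof.
  induction n as [|n [M HM]].
  - exists (f 0%Z). intros k Hk. assert (k = 0%Z) by lia. subst; lra.
  - exists (Rmax M (Rmax (f (Z.of_nat (S n))) (f (- Z.of_nat (S n))%Z))). intros k Hk.
    destruct (Z_le_gt_dec (Z.abs k) (Z.of_nat n)) as [H|H].
    + pose proof (HM k H). pose proof (Rmax_l M (Rmax (f (Z.of_nat (S n))) (f (- Z.of_nat (S n))%Z))). lra.
    + assert (k = Z.of_nat (S n) \/ k = (- Z.of_nat (S n))%Z) as [->| ->] by lia.
      * eapply Rle_trans; [|apply Rmax_r]. apply Rmax_l.
      * eapply Rle_trans; [|apply Rmax_r]. apply Rmax_r.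
Qed.

Lemma fin_bound x0 (F : nat -> Z -> R) N : exists M, forall j k, (j < N)%nat -> cone x0 j k -> F j k <= M.
Proof.
  induction N as [|N [M HM]].
  - exists 0. intros; lia.
  - set (B := 2 ^ N * Rabs x0 + 2 ^ N).
    destruct (range_bound (F N) (Z.to_nat (up B))) as [M2 HM2].
    exists (Rmax M M2). intros j k Hj Hc.
    destruct (Nat.eq_dec j N) as [->|Hne].
    + eapply Rle_trans; [|apply Rmax_r]. apply HM2.
      unfold cone in Hc. destruct (archimed B) as [H1 _].
      assert (Hk : Rabs (IZR k) < B).
      { unfold B. pose proof (Rabs_triang (IZR k - 2 ^ N * x0) (2 ^ N * x0)).
        replace (IZR k - 2 ^ N * x0 + 2 ^ N * x0) with (IZR k) in H by ring.
        rewrite Rabs_mult, (Rabs_pos_eq (2 ^ N)) in H by (left; apply pow2_pos). lra. }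
      rewrite Rabs_Zabs in Hk. assert (Z.abs k < up B)%Z by (apply lt_IZR; lra). lia.
    + eapply Rle_trans; [|apply Rmax_l]. apply HM; auto. lia.
Qed.

Lemma unif (P : nat -> Z -> Prop) (G : nat -> Z -> R) eps :
  (forall j, exists k, P j k) ->
  (forall kj : nat -> Z, (forall j, P j (kj j)) -> exists N : nat, forall j, (N <= j)%nat -> G j (kj j) <= eps) ->
  exists N : nat, forall j k, (N <= j)%nat -> P j k -> G j k <= eps.
Proof.
  intros Hex H.
  assert (Hc : forall j, exists k, P j k /\ ((exists k', P j k' /\ eps < G j k') -> eps < G j k)).
  { intro j. destruct (classic (exists k', P j k' /\ eps < G j k')) as [[k' [H1 H2]]|Hn].
    - exists k'. auto.
    - destruct (Hex j) as [k Hk]. exists k. split; auto. intro; contradiction. }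
  set (kj := fun j => proj1_sig (constructive_indefinite_description _ (Hc j))).
  assert (Hkj : forall j, P j (kj j) /\ ((exists k', P j k' /\ eps < G j k') -> eps < G j (kj j))).
  { intro j. unfold kj. destruct (constructive_indefinite_description _ (Hc j)); auto. }
  destruct (H kj (fun j => proj1 (Hkj j))) as [N HN]. exists N. intros j k Hj Hp.
  apply Rnot_lt_le. intro Hlt. specialize (HN j Hj). pose proof (proj2 (Hkj j) (ex_intro _ k (conj Hp Hlt))). lra.
Qed.

Lemma nat_large r : exists N : nat, r < INR N.
Proof.
  destruct (archimed r) as [H1 _]. exists (Z.to_nat (up r)).
  destruct (Z_le_gt_dec 0 (up r)).
  - rewrite INR_IZR_INZ, Z2Nat.id; auto.
  - pose proof (pos_INR (Z.to_nat (up r))). assert (IZR (up r) < 0) by (apply IZR_lt; lia). lra.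
Qed.

Lemma elem_formula alpha gamma x0 j k lam sigma : gamma < 1 -> 0 < lam ->
  Rpower 2 (- (INR j) * Sfun alpha gamma sigma)
    * Rpower ((1 + Rabs (IZR k - 2 ^ j * x0)) / lam) (Sfun alpha gamma sigma - sigma)
  = exp (- Jf j * alpha + (alpha - sigma) * ((Yf x0 j k - ln lam - Jf j * gamma) / (1 - gamma))).
Proof.
  intros Hg Hl. unfold Rpower, Sfun, Yf, Jf. rewrite <- exp_plus. f_equal.
  replace (ln ((1 + Rabs (IZR k - 2 ^ j * x0)) / lam)) with (ln (1 + Rabs (IZR k - 2 ^ j * x0)) - ln lam).
  - field. lra.
  - unfold Rdiv. rewrite ln_mult, ln_Rinv; try ring; auto; try apply A_pos; apply Rinv_0_lt_compat; auto.
Qed.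

Lemma is_inf_unique E m1 m2 : is_inf E m1 -> is_inf E m2 -> m1 = m2.
Proof. intros [H1 H2] [H3 H4]. apply Rle_antisym; auto. Qed.

Lemma is_inf_single alpha gamma x0 j k lam : gamma < 1 -> 0 < lam ->
  ln lam = Yf x0 j k - Jf j * gamma ->
  is_inf (bound_set alpha gamma x0 j k lam) (exp (- Jf j * alpha)).
Proof.
  intros Hg Hl Heq.
  assert (Hv : forall v, bound_set alpha gamma x0 j k lam v -> v = exp (- Jf j * alpha)).
  { intros v [sigma ->]. rewrite elem_formula by auto. f_equal. rewrite Heq.
    replace (Yf x0 j k - (Yf x0 j k - Jf j * gamma) - Jf j * gamma) with 0 by ring.
    unfold Rdiv; ring. }
  split.
  - intros v Hb. rewrite (Hv v Hb). lra.
  - intros b Hb. apply Hb. exists 0. symmetry. apply Hv. exists 0. reflexivity.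
Qed.

Lemma bs_pos alpha gamma x0 j k lam v : gamma < 1 -> 0 < lam ->
  bound_set alpha gamma x0 j k lam v -> 0 < v.
Proof. intros Hg Hl [sigma ->]. rewrite elem_formula by auto. apply exp_pos. Qed.

Lemma inf_nonneg alpha gamma x0 j k lam m : gamma < 1 -> 0 < lam ->
  is_inf (bound_set alpha gamma x0 j k lam) m -> 0 <= m.
Proof.
  intros Hg Hl [_ H]. apply H. intros v Hv. left. eapply bs_pos; eauto.
Qed.

Lemma is_inf_zero alpha gamma x0 j k lam : gamma < 1 -> 0 < lam ->
  ln lam <> Yf x0 j k - Jf j * gamma ->
  is_inf (bound_set alpha gamma x0 j k lam) 0.
Proof.
  intros Hg Hl Hne. split.
  - intros v Hv. left. eapply bs_pos; eauto.
  - intros b Hb. apply Rnot_lt_le. intro Hb0.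
    set (D := (Yf x0 j k - ln lam - Jf j * gamma) / (1 - gamma)).
    assert (HD : D <> 0).
    { unfold D. intro H. apply Hne. unfold Rdiv in H. apply Rmult_integral in H.
      destruct H as [H|H]; [lra|]. pose proof (Rinv_neq_0_compat (1 - gamma)). lra. }
    set (sigma := alpha - (ln b - 1 + Jf j * alpha) / D).
    assert (Hel : bound_set alpha gamma x0 j k lam (b * exp (-1))).
    { exists sigma. rewrite elem_formula by auto. fold D.
      rewrite <- (exp_ln b) at 1 by auto. rewrite <- exp_plus. f_equal.
      unfold sigma. field. auto. }
    specialize (Hb _ Hel).
    assert (exp (-1) < 1) by (rewrite <- exp_0; apply exp_increasing; lra).
    nra.
Qed.

Lemma S_id alpha gamma sigma : gamma < 1 ->
  Sfun alpha gamma sigma * (1 - gamma) + sigma * gamma = alpha.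
Proof. intro. unfold Sfun. field. lra. Qed.

Lemma S_lt alpha gamma sigma s : gamma < 1 ->
  (s < Sfun alpha gamma sigma <-> s * (1 - gamma) + sigma * gamma - alpha < 0).
Proof.
  intro Hg. pose proof (S_id alpha gamma sigma Hg). split; intro H'.
  - nra.
  - apply Rnot_le_lt. intro. nra.
Qed.

Lemma S_gt alpha gamma sigma s : gamma < 1 ->
  (Sfun alpha gamma sigma < s <-> 0 < s * (1 - gamma) + sigma * gamma - alpha).
Proof.
  intro Hg. pose proof (S_id alpha gamma sigma Hg). split; intro H'.
  - nra.
  - apply Rnot_le_lt. intro. nra.
Qed.

Lemma Phi_id X Y j s sigma alpha gamma :
  X + INR j * s * ln 2 + (sigma - s) * Y =
  (X + Jf j * alpha) + (sigma - s) * (Y - Jf j * gamma) + Jf j * (s * (1 - gamma) + sigma * gamma - alpha).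
Proof. unfold Jf. ring. Qed.

Lemma mono c x0 s0 s sigma : s <= s0 -> in_C2ml c x0 s0 (sigma - s0) -> in_C2ml c x0 s (sigma - s).
Proof.
  intros Hs H. apply trans in H. destruct H as [K HK]. apply trans.
  exists (K + (s0 - s) * ln 2). intros j k Hc Hn. specialize (HK j k Hc Hn).
  pose proof (Y_le x0 j k Hc). unfold Jf in *. nra.
Qed.

Lemma Lmem c x0 alpha gamma : gamma < 1 -> frontier_is c x0 (Sfun alpha gamma) ->
  forall sigma s, s < Sfun alpha gamma sigma -> in_C2ml c x0 s (sigma - s).
Proof.
  intros Hg Hf sigma s Hs. destruct (Hf sigma) as [Hub Hl].
  destruct (classic (exists s0, in_C2ml c x0 s0 (sigma - s0) /\ s <= s0)) as [[s0 [H1 H2]]|Hn].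
  - eapply mono; eauto.
  - exfalso. assert (Sfun alpha gamma sigma <= s); [|lra]. apply Hl. intros y Hy.
    apply Rnot_lt_le. intro. apply Hn. exists y. split; auto; lra.
Qed.

Lemma L1 c x0 alpha gamma : gamma < 1 -> frontier_is c x0 (Sfun alpha gamma) ->
  forall C0 eps, 0 < eps -> exists N : nat, forall j k, (N <= j)%nat -> cone x0 j k -> c j k <> 0 ->
    (ln (Rabs (c j k)) + Jf j * alpha) + C0 * (Yf x0 j k - Jf j * gamma) <= eps * Jf j.
Proof.
  intros Hg Hf C0 eps He.
  set (sigma := alpha + C0 * (1 - gamma) - eps / 2). set (s := sigma - C0).
  assert (Hs : s < Sfun alpha gamma sigma) by (apply S_lt; auto; unfold s, sigma; nra).
  pose proof (Lmem c x0 alpha gamma Hg Hf sigma s Hs) as H. apply trans in H. destruct H as [K HK].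
  destruct (nat_large (2 * Rabs K / (eps * ln 2))) as [N HN]. exists N. intros j k Hj Hc Hn.
  specialize (HK j k Hc Hn). rewrite Phi_id with (alpha := alpha) (gamma := gamma) in HK.
  replace (sigma - s) with C0 in HK by (unfold s; ring).
  replace (s * (1 - gamma) + sigma * gamma - alpha) with (- eps / 2) in HK by (unfold s, sigma; field).
  pose proof ln2_pos. apply le_INR in Hj.
  assert (Hr : 2 * Rabs K / (eps * ln 2) * (eps * ln 2) = 2 * Rabs K) by (field; lra).
  assert (Hep : 0 < eps * ln 2) by nra.
  assert (2 * Rabs K <= INR j * (eps * ln 2)).
  { rewrite <- Hr. apply Rmult_le_compat_r; lra. }
  pose proof (Rle_abs K). unfold Jf in *. nra.
Qed.

Lemma L2 c x0 alpha gamma : gamma < 1 -> frontier_is c x0 (Sfun alpha gamma) ->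
  forall delta (N : nat), 0 < delta -> exists j k, (N <= j)%nat /\ cone x0 j k /\ c j k <> 0 /\
    - delta * Jf j < ln (Rabs (c j k)) + Jf j * alpha.
Proof.
  intros Hg Hf delta N Hd.
  assert (HS : Sfun alpha gamma alpha = alpha) by (unfold Sfun; ring).
  assert (Hm : in_C2ml c x0 (alpha - 1) (alpha - (alpha - 1))) by (apply (Lmem c x0 alpha gamma); auto; lra).
  apply trans in Hm. destruct Hm as [K1 HK1].
  assert (Hnot : ~ in_C2ml c x0 (alpha + delta) (alpha - (alpha + delta))).
  { intro H. destruct (Hf alpha) as [Hub _]. specialize (Hub _ H). lra. }
  set (K := Rmax 0 (K1 + (1 + delta) * INR N * ln 2)).
  assert (Hex : exists j k, cone x0 j k /\ c j k <> 0 /\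
     K < ln (Rabs (c j k)) + INR j * (alpha + delta) * ln 2 + (alpha - (alpha + delta)) * Yf x0 j k).
  { apply NNPP. intro Hn. apply Hnot. apply trans. exists K. intros j k Hc Hc0.
    apply Rnot_lt_le. intro Hl. apply Hn. exists j, k. auto. }
  destruct Hex as [j [k [Hc [Hc0 HK]]]]. exists j, k.
  pose proof (HK1 j k Hc Hc0) as H1. pose proof (Y_nonneg x0 j k). pose proof ln2_pos.
  pose proof (Rmax_l 0 (K1 + (1 + delta) * INR N * ln 2)) as H3.
  pose proof (Rmax_r 0 (K1 + (1 + delta) * INR N * ln 2)) as H4. fold K in H3, H4.
  split; [| split; [auto | split; [auto|]]].
  - destruct (le_lt_dec N j) as [|Hlt]; auto. exfalso.
    apply lt_INR in Hlt. assert (0 < (1 + delta) * ln 2 * (INR N - INR j)) by (apply Rmult_lt_0_compat; [apply Rmult_lt_0_compat|]; lra). assert (0 <= delta * Yf x0 j k) by (apply Rmult_le_pos; lra). nra.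
  - unfold Jf. nra.
Qed.

Lemma abs_div_le a J e : 0 < J -> -(e * J) <= a -> a <= e * J -> Rabs (a / J) <= e.
Proof.
  intros HJ H1 H2. apply Rabs_le.
  assert (Ha : a = (a / J) * J) by (field; lra). rewrite Ha in H1, H2. split; nra.
Qed.

Lemma Jf_pos j : (1 <= j)%nat -> 0 < Jf j.
Proof. intro. unfold Jf. apply Rmult_lt_0_compat; [apply lt_0_INR; lia | apply ln2_pos]. Qed.

Lemma pick c x0 alpha gamma : gamma < 1 -> frontier_is c x0 (Sfun alpha gamma) ->
  forall (n N0 : nat), exists jk : nat * Z,
    (N0 <= fst jk)%nat /\ (1 <= fst jk)%nat /\ cone x0 (fst jk) (snd jk) /\ c (fst jk) (snd jk) <> 0 /\
    Rabs ((ln (Rabs (c (fst jk) (snd jk))) + Jf (fst jk) * alpha) / Jf (fst jk)) <= 1 / (INR n + 1) /\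
    Rabs ((Yf x0 (fst jk) (snd jk) - Jf (fst jk) * gamma) / Jf (fst jk)) <= 1 / (INR n + 1).
Proof.
  intros Hg Hf n N0.
  pose proof (pos_INR n) as Hn.
  set (e := 1 / (INR n + 1)). assert (He : 0 < e) by (unfold e; apply Rdiv_lt_0_compat; lra).
  set (M := 2 * (INR n + 1)).
  destruct (L1 c x0 alpha gamma Hg Hf 0 e He) as [N1 H1].
  destruct (L1 c x0 alpha gamma Hg Hf M e He) as [N2 H2].
  destruct (L1 c x0 alpha gamma Hg Hf (- M) e He) as [N3 H3].
  destruct (L2 c x0 alpha gamma Hg Hf e (N0 + N1 + N2 + N3 + 1) He) as [j [k [Hj [Hc [Hc0 Hlow]]]]].
  exists (j, k). simpl.
  assert (HJ : 0 < Jf j) by (apply Jf_pos; lia).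
  specialize (H1 j k ltac:(lia) Hc Hc0). specialize (H2 j k ltac:(lia) Hc Hc0).
  specialize (H3 j k ltac:(lia) Hc Hc0).
  set (p := ln (Rabs (c j k)) + Jf j * alpha) in *. set (q := Yf x0 j k - Jf j * gamma) in *.
  assert (HeM : e * M = 2) by (unfold e, M; field; lra).
  assert (HM : 1 <= M) by (unfold M; lra).
  repeat split; try lia; auto.
  - apply abs_div_le; auto; lra.
  - assert (He1 : e <= 1) by (unfold e; apply Rmult_le_reg_r with (INR n + 1); [lra|]; field_simplify; lra).
    assert (Hee : 0 <= e * (1 - e) * Jf j) by (apply Rmult_le_pos; [apply Rmult_le_pos|]; lra).
    apply abs_div_le; auto.
    + assert (0 <= e * (M * q + 2 * e * Jf j)) by (apply Rmult_le_pos; lra).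
      assert (e * (M * q) = 2 * q) by (rewrite <- Rmult_assoc, HeM; ring). nra.
    + assert (0 <= e * (2 * e * Jf j - M * q)) by (apply Rmult_le_pos; lra).
      assert (e * (M * q) = 2 * q) by (rewrite <- Rmult_assoc, HeM; ring). nra.
Qed.

Definition mkseq (f : nat -> nat -> nat * Z) : nat -> nat * Z :=
  fix sq n := match n with O => f O O | S m => f (S m) (S (fst (sq m))) end.

Lemma log2_div x j : (1 <= j)%nat -> log2 x / INR j = ln x / Jf j.
Proof.
  intro. unfold log2, Jf. pose proof ln2_pos. assert (0 < INR j) by (apply lt_0_INR; lia).
  field. lra.
Qed.

Lemma div_le a J e : 0 < J -> a <= e * J -> a / J <= e.
Proof. intros HJ H. assert (Ha : a = (a / J) * J) by (field; lra). rewrite Ha in H. nra. Qed.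

Lemma LtoR (x0 alpha gamma : R) (c : coeffs) (Hgamma0 : 0 <= gamma) (Hgamma1 : gamma < 1) :
  frontier_is c x0 (Sfun alpha gamma) ->
  exists (Cs lam : nat -> Z -> R),
    (forall j k, cone x0 j k -> 0 < Cs j k /\ 0 < lam j k) /\
    (forall j k, cone x0 j k ->
       forall m, is_inf (bound_set alpha gamma x0 j k (lam j k)) m ->
         Rabs (c j k) <= Cs j k * m) /\
    (forall (C0 : R) (kj : nat -> Z), (forall j, cone x0 j (kj j)) ->
       forall eps, 0 < eps -> exists N : nat, forall j : nat, (N <= j)%nat ->
         log2 (Cs j (kj j)) / INR j + C0 * (log2 (lam j (kj j)) / INR j) <= eps) /\
    (exists (jn : nat -> nat) (kn : nat -> Z),
       (forall n, (jn n < jn (S n))%nat) /\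
       (forall n, cone x0 (jn n) (kn n)) /\
       (forall n m, is_inf (bound_set alpha gamma x0 (jn n) (kn n) (lam (jn n) (kn n))) m ->
          Rabs (c (jn n) (kn n)) = Cs (jn n) (kn n) * m) /\
       (forall n, c (jn n) (kn n) <> 0) /\
       Un_cv (fun n => log2 (Cs (jn n) (kn n)) / INR (jn n)) 0 /\
       Un_cv (fun n => log2 (lam (jn n) (kn n)) / INR (jn n)) 0).
Proof.
  intro Hf.
  set (Cs := fun j k => if Req_dec_T (c j k) 0 then 1 else exp (ln (Rabs (c j k)) + Jf j * alpha)).
  set (lam := fun j k => if Req_dec_T (c j k) 0 then 1 else exp (Yf x0 j k - Jf j * gamma)).
  assert (Hpos : forall j k, 0 < Cs j k /\ 0 < lam j k).
  { intros j k. unfold Cs, lam. destruct (Req_dec_T (c j k) 0); split; try lra; apply exp_pos. }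
  assert (Heq : forall j k m, c j k <> 0 -> is_inf (bound_set alpha gamma x0 j k (lam j k)) m ->
            Rabs (c j k) = Cs j k * m).
  { intros j k m Hc Hm.
    assert (Hl : ln (lam j k) = Yf x0 j k - Jf j * gamma).
    { unfold lam. destruct (Req_dec_T (c j k) 0); [contradiction|]. apply ln_exp. }
    pose proof (is_inf_single alpha gamma x0 j k (lam j k) Hgamma1 (proj2 (Hpos j k)) Hl) as Hs.
    rewrite (is_inf_unique _ _ _ Hm Hs). unfold Cs. destruct (Req_dec_T (c j k) 0); [contradiction|].
    rewrite <- exp_plus. rewrite <- (exp_ln (Rabs (c j k))) at 1 by (apply Rabs_pos_lt; auto).
    f_equal. ring. }
  exists Cs, lam. split; [intros; apply Hpos|]. split; [|split].
  - intros j k Hc m Hm. destruct (Req_dec (c j k) 0) as [H0|H0].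
    + rewrite H0, Rabs_R0. apply Rmult_le_pos; [left; apply Hpos|].
      eapply inf_nonneg; eauto. apply Hpos.
    + rewrite (Heq j k m H0 Hm). lra.
  - intros C0 kj Hkj eps He.
    destruct (L1 c x0 alpha gamma Hgamma1 Hf C0 eps He) as [N HN].
    exists (N + 1)%nat. intros j Hj.
    rewrite !log2_div by lia. assert (HJ : 0 < Jf j) by (apply Jf_pos; lia).
    unfold Cs, lam. destruct (Req_dec_T (c j (kj j)) 0) as [H0|H0].
    + rewrite ln_1. unfold Rdiv. lra.
    + rewrite !ln_exp. specialize (HN j (kj j) ltac:(lia) (Hkj j) H0).
      replace ((ln (Rabs (c j (kj j))) + Jf j * alpha) / Jf j + C0 * ((Yf x0 j (kj j) - Jf j * gamma) / Jf j))
        with (((ln (Rabs (c j (kj j))) + Jf j * alpha) + C0 * (Yf x0 j (kj j) - Jf j * gamma)) / Jf j)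
        by (field; lra).
      apply div_le; auto.
  - set (f := fun n N0 => proj1_sig (constructive_indefinite_description _ (pick c x0 alpha gamma Hgamma1 Hf n N0))).
    assert (Hfs : forall n N0, (N0 <= fst (f n N0))%nat /\ (1 <= fst (f n N0))%nat /\
       cone x0 (fst (f n N0)) (snd (f n N0)) /\ c (fst (f n N0)) (snd (f n N0)) <> 0 /\
       Rabs ((ln (Rabs (c (fst (f n N0)) (snd (f n N0)))) + Jf (fst (f n N0)) * alpha) / Jf (fst (f n N0))) <= 1 / (INR n + 1) /\
       Rabs ((Yf x0 (fst (f n N0)) (snd (f n N0)) - Jf (fst (f n N0)) * gamma) / Jf (fst (f n N0))) <= 1 / (INR n + 1)).
    { intros n N0. unfold f. destruct (constructive_indefinite_description _ _). exact a. }
    assert (Hsq : forall n, exists N0, mkseq f n = f n N0).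
    { intros [|n]; simpl; eauto. }
    exists (fun n => fst (mkseq f n)), (fun n => snd (mkseq f n)).
    split; [|split; [|split; [|split; [|split]]]].
    + intro n. simpl. pose proof (Hfs (S n) (S (fst (mkseq f n)))). lia.
    + intro n. destruct (Hsq n) as [N0 ->]. apply Hfs.
    + intros n m. destruct (Hsq n) as [N0 ->]. apply Heq. apply Hfs.
    + intro n. destruct (Hsq n) as [N0 ->]. apply Hfs.
    + intros eps He. destruct (nat_large (1 / eps)) as [N HN]. exists N. intros n Hn.
      destruct (Hsq n) as [N0 ->]. destruct (Hfs n N0) as [_ [H1 [_ [H0 [Hp _]]]]].
      unfold Rdist. rewrite Rminus_0_r, log2_div by auto.
      unfold Cs. destruct (Req_dec_T _ _) as [|_]; [contradiction|]. rewrite ln_exp.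
      eapply Rle_lt_trans; [exact Hp|].
      apply le_INR in Hn. pose proof (pos_INR N).
      assert (1 < eps * (INR n + 1)).
      { assert (1 / eps * eps = 1) by (field; lra). nra. }
      apply Rmult_lt_reg_r with (INR n + 1); [lra|]. unfold Rdiv. rewrite Rmult_1_l, Rinv_l; lra.
    + intros eps He. destruct (nat_large (1 / eps)) as [N HN]. exists N. intros n Hn.
      destruct (Hsq n) as [N0 ->]. destruct (Hfs n N0) as [_ [H1 [_ [H0 [_ Hp]]]]].
      unfold Rdist. rewrite Rminus_0_r, log2_div by auto.
      unfold lam. destruct (Req_dec_T _ _) as [|_]; [contradiction|]. rewrite ln_exp.
      eapply Rle_lt_trans; [exact Hp|].
      apply le_INR in Hn. pose proof (pos_INR N).
      assert (1 < eps * (INR n + 1)).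
      { assert (1 / eps * eps = 1) by (field; lra). nra. }
      apply Rmult_lt_reg_r with (INR n + 1); [lra|]. unfold Rdiv. rewrite Rmult_1_l, Rinv_l; lra.
Qed.

Lemma abs_div_lt a J t : 0 < J -> Rabs (a / J) < t -> -(t * J) < a /\ a < t * J.
Proof.
  intros HJ H. assert (Ha : a = (a / J) * J) by (field; lra).
  apply Rabs_def2 in H. rewrite Ha. split; nra.
Qed.

Lemma R1 x0 alpha gamma (c : coeffs) (Cs lam : nat -> Z -> R) : gamma < 1 ->
  (forall j k, cone x0 j k -> 0 < Cs j k /\ 0 < lam j k) ->
  (forall j k, cone x0 j k ->
       forall m, is_inf (bound_set alpha gamma x0 j k (lam j k)) m ->
         Rabs (c j k) <= Cs j k * m) ->
  forall j k, cone x0 j k -> c j k <> 0 ->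
    ln (lam j k) = Yf x0 j k - Jf j * gamma /\ ln (Rabs (c j k)) + Jf j * alpha <= ln (Cs j k).
Proof.
  intros Hg Hpos Hstar j k Hc Hc0. destruct (Hpos j k Hc) as [HC Hl].
  destruct (Req_dec (ln (lam j k)) (Yf x0 j k - Jf j * gamma)) as [Heq|Hne].
  - split; auto.
    pose proof (Hstar j k Hc _ (is_inf_single alpha gamma x0 j k (lam j k) Hg Hl Heq)) as H.
    apply ln_le' in H; [|apply Rabs_pos_lt; auto].
    rewrite ln_mult, ln_exp in H; auto; [lra | apply exp_pos].
  - exfalso. pose proof (Hstar j k Hc _ (is_inf_zero alpha gamma x0 j k (lam j k) Hg Hl Hne)) as H.
    rewrite Rmult_0_r in H. pose proof (Rabs_pos_lt _ Hc0). lra.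
Qed.

Lemma jn_ge (jn : nat -> nat) : (forall n, (jn n < jn (S n))%nat) -> forall n, (n <= jn n)%nat.
Proof. intros H n. induction n; [lia|]. specialize (H n). lia. Qed.

Lemma RtoL (x0 alpha gamma : R) (c : coeffs) (Hgamma0 : 0 <= gamma) (Hgamma1 : gamma < 1) :
  (exists (Cs lam : nat -> Z -> R),
    (forall j k, cone x0 j k -> 0 < Cs j k /\ 0 < lam j k) /\
    (forall j k, cone x0 j k ->
       forall m, is_inf (bound_set alpha gamma x0 j k (lam j k)) m ->
         Rabs (c j k) <= Cs j k * m) /\
    (forall (C0 : R) (kj : nat -> Z), (forall j, cone x0 j (kj j)) ->
       forall eps, 0 < eps -> exists N : nat, forall j : nat, (N <= j)%nat ->
         log2 (Cs j (kj j)) / INR j + C0 * (log2 (lam j (kj j)) / INR j) <= eps) /\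
    (exists (jn : nat -> nat) (kn : nat -> Z),
       (forall n, (jn n < jn (S n))%nat) /\
       (forall n, cone x0 (jn n) (kn n)) /\
       (forall n m, is_inf (bound_set alpha gamma x0 (jn n) (kn n) (lam (jn n) (kn n))) m ->
          Rabs (c (jn n) (kn n)) = Cs (jn n) (kn n) * m) /\
       (forall n, c (jn n) (kn n) <> 0) /\
       Un_cv (fun n => log2 (Cs (jn n) (kn n)) / INR (jn n)) 0 /\
       Un_cv (fun n => log2 (lam (jn n) (kn n)) / INR (jn n)) 0)) ->
  frontier_is c x0 (Sfun alpha gamma).
Proof.
  intros [Cs [lam [Hpos [Hstar [Hi [jn [kn [Hinc [Hcone [Heqn [Hnz [Hu1 Hu2]]]]]]]]]]]].
  pose proof (R1 x0 alpha gamma c Cs lam Hgamma1 Hpos Hstar) as HR1.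
  pose proof ln2_pos as Hln2.
  intro sigma. split.
  - intros s Hs. apply Rnot_lt_le. intro Hlt. apply S_gt in Hlt; auto.
    set (e := s * (1 - gamma) + sigma * gamma - alpha) in *.
    apply trans in Hs. destruct Hs as [K HK].
    set (t2 := e / (4 * (Rabs (sigma - s) + 1))).
    assert (Ht2 : 0 < t2) by (unfold t2; apply Rdiv_lt_0_compat; [lra|]; pose proof (Rabs_pos (sigma - s)); lra).
    destruct (Hu1 (e / 4) ltac:(lra)) as [N1 HN1].
    destruct (Hu2 t2 Ht2) as [N2 HN2].
    destruct (nat_large (2 * Rabs K / (e * ln 2))) as [N3 HN3].
    set (n := (N1 + N2 + N3 + 1)%nat).
    specialize (HN1 n ltac:(unfold n; lia)). specialize (HN2 n ltac:(unfold n; lia)).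
    pose proof (jn_ge jn Hinc n) as Hjn.
    set (j := jn n) in *. set (k := kn n) in *.
    assert (Hj1 : (1 <= j)%nat) by (unfold n in Hjn; lia).
    assert (HJ : 0 < Jf j) by (apply Jf_pos; auto).
    unfold Rdist in HN1, HN2. rewrite Rminus_0_r, log2_div in HN1, HN2 by auto.
    destruct (HR1 j k (Hcone n) (Hnz n)) as [Hl _].
    destruct (Hpos j k (Hcone n)) as [HC HL].
    pose proof (Heqn n _ (is_inf_single alpha gamma x0 j k (lam j k) Hgamma1 HL Hl)) as Hc.
    fold j k in Hc.
    assert (Hlc : ln (Rabs (c j k)) = ln (Cs j k) - Jf j * alpha).
    { rewrite Hc, ln_mult, ln_exp; [ring | auto | apply exp_pos]. }
    specialize (HK j k (Hcone n) (Hnz n)).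
    rewrite Phi_id with (alpha := alpha) (gamma := gamma) in HK. fold e in HK.
    rewrite Hlc, <- Hl in HK.
    apply abs_div_lt in HN1; auto. apply abs_div_lt in HN2; auto.
    assert (Hq : Rabs ((sigma - s) * ln (lam j k)) <= e / 4 * Jf j).
    { rewrite Rabs_mult.
      assert (Rabs (ln (lam j k)) <= t2 * Jf j) by (apply Rabs_le; lra).
      pose proof (Rabs_pos (sigma - s)).
      assert (Rabs (sigma - s) * t2 <= e / 4).
      { unfold t2. apply Rmult_le_reg_r with (4 * (Rabs (sigma - s) + 1)); [lra|].
        field_simplify; [|lra]. nra. }
      assert (Rabs (sigma - s) * Rabs (ln (lam j k)) <= Rabs (sigma - s) * (t2 * Jf j)) by (apply Rmult_le_compat_l; lra).
      nra. }
    pose proof (Rle_abs (-((sigma - s) * ln (lam j k)))). rewrite Rabs_Ropp in H.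
    assert (HJn : INR N3 * ln 2 <= Jf j).
    { unfold Jf. apply Rmult_le_compat_r; [lra|]. apply le_INR. unfold n in Hjn. lia. }
    assert (Hr : 2 * Rabs K / (e * ln 2) * (e * ln 2) = 2 * Rabs K) by (field; lra).
    assert (2 * Rabs K < INR N3 * (e * ln 2)).
    { rewrite <- Hr. apply Rmult_lt_compat_r; [nra|lra]. }
    pose proof (Rle_abs K). nra.
  - intros b Hb. apply Rnot_lt_le. intro Hlt.
    set (s := (b + Sfun alpha gamma sigma) / 2).
    assert (Hsb : b < s) by (unfold s; lra).
    assert (HsS : s < Sfun alpha gamma sigma) by (unfold s; lra).
    apply S_lt in HsS; auto. set (e := s * (1 - gamma) + sigma * gamma - alpha) in *.
    assert (Hin : in_C2ml c x0 s (sigma - s)); [| specialize (Hb s Hin); lra].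
    apply trans.
    destruct (unif (cone x0) (fun j k => log2 (Cs j k) / INR j + (sigma - s) * (log2 (lam j k) / INR j)) (- e)
                (cone_ex x0)) as [N HN].
    { intros kj Hkj. apply (Hi (sigma - s) kj Hkj (- e)). lra. }
    destruct (fin_bound x0 (fun j k => ln (Rabs (c j k)) + INR j * s * ln 2 + (sigma - s) * Yf x0 j k) (N + 1)) as [M HM].
    exists (Rmax M 0). intros j k Hc Hc0.
    destruct (lt_dec j (N + 1)) as [Hj|Hj].
    + eapply Rle_trans; [apply (HM j k Hj Hc)|]. apply Rmax_l.
    + eapply Rle_trans; [|apply Rmax_r].
      specialize (HN j k ltac:(lia) Hc). simpl in HN.
      assert (HJ : 0 < Jf j) by (apply Jf_pos; lia).
      rewrite !log2_div in HN by lia.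
      destruct (HR1 j k Hc Hc0) as [Hl Hle].
      rewrite Phi_id with (alpha := alpha) (gamma := gamma). fold e. rewrite <- Hl.
      replace (ln (Cs j k) / Jf j + (sigma - s) * (ln (lam j k) / Jf j))
        with ((ln (Cs j k) + (sigma - s) * ln (lam j k)) / Jf j) in HN by (field; lra).
      assert (Ha : ln (Cs j k) + (sigma - s) * ln (lam j k) = ((ln (Cs j k) + (sigma - s) * ln (lam j k)) / Jf j) * Jf j) by (field; lra).
      assert (ln (Cs j k) + (sigma - s) * ln (lam j k) <= - e * Jf j) by (rewrite Ha; apply Rmult_le_compat_r; lra).
      nra.
Qed.
Theorem theorem2p2 (x0 alpha gamma : R) (c : coeffs)
  (Hgamma0 : 0 <= gamma) (Hgamma1 : gamma < 1) :
  frontier_is c x0 (Sfun alpha gamma) <->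
  exists (Cs lam : nat -> Z -> R),
    (forall j k, cone x0 j k -> 0 < Cs j k /\ 0 < lam j k) /\
    (* ( * ) *)
    (forall j k, cone x0 j k ->
       forall m, is_inf (bound_set alpha gamma x0 j k (lam j k)) m ->
         Rabs (c j k) <= Cs j k * m) /\
    (* (i) *)
    (forall (C0 : R) (kj : nat -> Z), (forall j, cone x0 j (kj j)) ->
       forall eps, 0 < eps -> exists N : nat, forall j : nat, (N <= j)%nat ->
         log2 (Cs j (kj j)) / INR j + C0 * (log2 (lam j (kj j)) / INR j) <= eps) /\
    (* (ii) *)
    (exists (jn : nat -> nat) (kn : nat -> Z),
       (forall n, (jn n < jn (S n))%nat) /\
       (forall n, cone x0 (jn n) (kn n)) /\
       (forall n m, is_inf (bound_set alpha gamma x0 (jn n) (kn n) (lam (jn n) (kn n))) m ->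
          Rabs (c (jn n) (kn n)) = Cs (jn n) (kn n) * m) /\
       (forall n, c (jn n) (kn n) <> 0) /\
       Un_cv (fun n => log2 (Cs (jn n) (kn n)) / INR (jn n)) 0 /\
       Un_cv (fun n => log2 (lam (jn n) (kn n)) / INR (jn n)) 0).
Proof.
  split; [apply LtoR | apply RtoL]; auto.
Qed.
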